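(* For every single-elimination tournament $\mathcal{T}$ with $n$ players and every scoring system $\sigma$ of $\mathcal{T}$, we have $\dim(\mathcal{T},\sigma)\le n-1$.
   Context: A single-elimination tournament is a finite directed graph $\mathcal{T}$ such that: (a) $\mathcal{T}$ has exactly one sink (vertex with no out-neighbours); (b) every non-sink vertex has exactly one out-neighbour; (c) $\mathcal{T}$ has no directed cycles; (d) $|N^-(v)|\ne 1$ for every vertex $v$, where $N^-(v)$ denotes the set of in-neighbours of $v$. The players $P(\mathcal{T})$ are the sources (vertices with no in-neighbours) and the matches are $M(\mathcal{T})=V(\mathcal{T})\setminus P(\mathcal{T})$. A bracket is a function $B:V(\mathcal{T})\to P(\mathcal{T})$ with $B(a)=a$ for every player $a$ and $B(x)\in\{B(u):u\in N^-(x)\}$ for every match $x$. A scoring system is any function $\sigma:M(\mathcal{T})\to\mathbb{R}_{>0}$. For brackets $B,B'$ let $\mathrm{score}_\sigma(B,B')=\sum_{x\in M(\mathcal{T}):\,B(x)=B'(x)}\sigma(x)$. A set of brackets $\mathcal{B}$ is $\sigma$-resolving if for every pair of distinct brackets $B\ne B'$ there is $B_i\in\mathcal{B}$ with $\mathrm{score}_\sigma(B_i,B)\ne\mathrm{score}_\sigma(B_i,B')$. $\dim(\mathcal{T},\sigma)$ denotes the minimum size of a $\sigma$-resolving set. *)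

(* Defs.v *)
From HB Require Import structures.
From mathcomp Require Import all_boot all_order all_algebra.
From mathcomp Require Import reals.
Set Implicit Arguments. Unset Strict Implicit. Unset Printing Implicit Defensive.
Import Order.TTheory GRing.Theory Num.Theory.

Section Tournament.
Variable V : finType.
Variable e : rel V.

Definition out_nbrs (v : V) : {set V} := [set u | e v u].
Definition in_nbrs (v : V) : {set V} := [set u | e u v].

Definition is_sink (v : V) : bool := out_nbrs v == set0.

Definition acyclic_graph : Prop := forall u v, e u v -> ~~ connect e v u.

Definition single_elim_tournament : Prop :=
  [/\ #|[set v | is_sink v]| = 1,
      (forall v, ~~ is_sink v -> #|out_nbrs v| = 1),
      acyclic_graph
    & (forall v, #|in_nbrs v| != 1)].

Definition is_player (v : V) : bool := in_nbrs v == set0.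
Definition is_match (v : V) : bool := ~~ is_player v.

Definition players : {set V} := [set v | is_player v].

Definition is_bracket (B : {ffun V -> V}) : Prop :=
  [/\ (forall v, is_player (B v)),
      (forall a, is_player a -> B a = a)
    & (forall x, is_match x -> exists2 u, u \in in_nbrs x & B x = B u)].

Variable R : realType.
Local Open Scope ring_scope.

Definition scoring_system (sigma : V -> R) : Prop :=
  forall x, is_match x -> 0 < sigma x.

Definition score (sigma : V -> R) (B B' : {ffun V -> V}) : R :=
  \sum_(x | is_match x && (B x == B' x)) sigma x.

Definition resolving (sigma : V -> R) (S : {set {ffun V -> V}}) : Prop :=
  (forall Bi, Bi \in S -> is_bracket Bi) /\
  forall B B', is_bracket B -> is_bracket B' -> B != B' ->
    exists2 Bi, Bi \in S & score sigma Bi B != score sigma Bi B'.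

End Tournament.

(* Main.v *)
Require Import Defs.
From HB Require Import structures.
From mathcomp Require Import all_boot all_order all_algebra.
From mathcomp Require Import reals.
Set Implicit Arguments. Unset Strict Implicit. Unset Printing Implicit Defensive.
Import Order.TTheory GRing.Theory Num.Theory.

Definition fnl (V : finType) (e : rel V) := forall u v w, e u v -> e u w -> v = w.

Lemma first_step (V : finType) (e : rel V) a b :
  connect e a b -> a != b -> exists2 v, e a v & connect e v b.
Proof.
move=> /connectP [[|v s] /= Hp ->]; first by rewrite eqxx.
move=> _; case/andP: Hp => Hav Hp; exists v => //.
by apply/connectP; exists s.
Qed.

Lemma last_step (V : finType) (e : rel V) a b :
  connect e a b -> a != b -> exists2 w, connect e a w & e w b.
Proof.
move=> /connectP [s]; elim/last_ind: s => [|s w _] /=; first by move=> _ ->; rewrite eqxx.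
rewrite rcons_path last_rcons => /andP [Hp Hw] -> _.
exists (last a s) => //; by apply/connectP; exists s.
Qed.

Lemma conn_antisym (V : finType) (e : rel V) :
  acyclic_graph e -> forall a b, connect e a b -> connect e b a -> a = b.
Proof.
move=> Hac a b Hab Hba; apply/eqP; apply/negPn/negP => Hne.
have [v Hav Hvb] := first_step Hab Hne.
by move: (Hac _ _ Hav); rewrite (connect_trans Hvb Hba).
Qed.

Lemma chain_aux (V : finType) (e : rel V) : fnl e -> forall s p z,
  path e p s -> connect e p z -> connect e (last p s) z || connect e z (last p s).
Proof.
move=> Hf; elim=> [|v s IH] p z /=.
  by move=> _ ->.
move=> /andP [Hpv Hp] Hpz.
case: (eqVneq p z) => [<-|Hne].
  apply/orP; right; apply/connectP; exists (v :: s) => //=; by rewrite Hpv.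
have [w Hpw Hwz] := first_step Hpz Hne.
have := Hf _ _ _ Hpv Hpw => Evw; subst w.
exact: IH.
Qed.

Lemma chain (V : finType) (e : rel V) : fnl e -> forall p y z,
  connect e p y -> connect e p z -> connect e y z || connect e z y.
Proof.
move=> Hf p y z /connectP [s Hs ->]; exact: chain_aux.
Qed.

Definition anc (V : finType) (e : rel V) x := [set z | connect e z x].

Lemma anc_lt (V : finType) (e : rel V) : acyclic_graph e ->
  forall z y, connect e z y -> z != y -> (#|anc e z| < #|anc e y|)%N.
Proof.
move=> Hac z y Hzy Hne; apply: proper_card; apply/properP; split.
  apply/subsetP => w; rewrite !inE => Hw; exact: connect_trans Hw Hzy.
exists y; rewrite !inE ?connect0 //; apply/negP => Hyz.
by move: Hne; rewrite (conn_antisym Hac Hzy Hyz) eqxx.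
Qed.

Lemma anc_ind (V : finType) (e : rel V) (P : V -> Prop) : acyclic_graph e ->
  (forall x, (forall z, connect e z x -> z != x -> P z) -> P x) -> forall x, P x.
Proof.
move=> Hac H x; have [n Hx] : exists n, (#|anc e x| <= n)%N by exists #|anc e x|.
elim: n x Hx => [|n IH] x Hx.
  apply: H => z Hz Hne; have := anc_lt Hac Hz Hne; by rewrite ltnNge (leq_trans Hx).
apply: H => z Hz Hne; apply: IH; have := anc_lt Hac Hz Hne => H1.
by rewrite -ltnS (leq_trans H1 Hx).
Qed.


Lemma set_fnl (V : finType) (e : rel V) : single_elim_tournament e -> fnl e.
Proof.
case=> _ Hb _ _ u v w Huv Huw.
have Hns : ~~ is_sink e u.
  rewrite /is_sink; apply/set0Pn; exists v; by rewrite inE.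
have [z Hz] := cards1P (introT eqP (Hb u Hns)).
have : v \in out_nbrs e u by rewrite inE.
have : w \in out_nbrs e u by rewrite inE.
by rewrite Hz !inE => /eqP -> /eqP ->.
Qed.

Lemma set_acyc (V : finType) (e : rel V) : single_elim_tournament e -> acyclic_graph e.
Proof. by case. Qed.

Lemma player_conn (V : finType) (e : rel V) p a :
  is_player e a -> connect e p a -> p = a.
Proof.
move=> Ha Hpa; apply/eqP; apply/negPn/negP => Hne.
have [w _ Hw] := last_step Hpa Hne.
move: Ha; rewrite /is_player => /eqP Ha.
have : w \in in_nbrs e a by rewrite inE.
by rewrite Ha inE.
Qed.

Lemma match_nbr (V : finType) (e : rel V) w x : e w x -> is_match e x.
Proof.
move=> Hwx; rewrite /is_match /is_player; apply/set0Pn; exists w; by rewrite inE.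
Qed.

Lemma br_conn (V : finType) (e : rel V) (B : {ffun V -> V}) :
  acyclic_graph e -> is_bracket e B -> forall x, connect e (B x) x.
Proof.
move=> Hac [H1 H2 H3]; apply: (anc_ind (P := fun x => connect e (B x) x) Hac) => x IH.
case Hx: (is_player e x); first by rewrite H2 ?connect0.
have [u Hu ->] := H3 x (negbT Hx).
move: Hu; rewrite inE => Hux.
have Hne : u != x.
  apply/negP => /eqP Eux; subst u; move: (Hac _ _ Hux); by rewrite connect0.
apply: connect_trans (IH u (connect1 Hux) Hne) (connect1 Hux).
Qed.

Lemma br_path (V : finType) (e : rel V) (B : {ffun V -> V}) :
  single_elim_tournament e -> is_bracket e B ->
  forall w z, connect e w z -> connect e (B z) w -> B w = B z.
Proof.
move=> Ht HB; have Hf := set_fnl Ht; have Hac := set_acyc Ht.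
have HB' := HB; case: HB' => H1 H2 H3.
move=> w z /connectP [s Hs ->]; elim/last_ind: s Hs => [|s v IH] //=.
rewrite rcons_path last_rcons => /andP [Hs Hm] Hc.
set m := last w s in Hm IH.
have Hmv : B m = B v.
  have [u Hu Ev] := H3 v (match_nbr Hm).
  move: Hu; rewrite inE => Huv.
  have C1 : connect e (B v) u by rewrite Ev; exact: br_conn.
  have C2 : connect e (B v) m by apply: connect_trans Hc _; apply/connectP; exists s.
  suff -> : m = u by rewrite Ev.
  case/orP: (chain Hf C1 C2) => Hc'.
    apply/esym/eqP/negPn/negP => Hne.
    have [t Hut Htm] := first_step Hc' Hne.
    have Etv := Hf _ _ _ Hut Huv; subst t.
    by move: (Hac _ _ Hm); rewrite Htm.
  apply/eqP/negPn/negP => Hne.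
  have [t Hut Htm] := first_step Hc' Hne.
  have Etv := Hf _ _ _ Hut Hm; subst t.
  by move: (Hac _ _ Huv); rewrite Htm.
rewrite -Hmv; apply: IH => //; by rewrite Hmv.
Qed.


Definition Pr (V : finType) (e : rel V) x p := is_player e p && connect e p x.
Definition minP (V : finType) (e : rel V) x p :=
  Pr e x p && [forall q, Pr e x q ==> (enum_rank p <= enum_rank q)%N].
Definition B0 (V : finType) (e : rel V) : {ffun V -> V} :=
  [ffun x => odflt x [pick p | minP e x p]].

Lemma reach_player (V : finType) (e : rel V) : acyclic_graph e ->
  forall x, exists p, Pr e x p.
Proof.
move=> Hac; apply: (anc_ind (P := fun x => exists p, Pr e x p) Hac) => x IH.
case Hx: (is_player e x); first by exists x; rewrite /Pr Hx connect0.
move: Hx; rewrite /is_player => /negbT /set0Pn [u]; rewrite inE => Hux.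
have Hne : u != x.
  apply/negP => /eqP Eux; subst u; move: (Hac _ _ Hux); by rewrite connect0.
have [p /andP [Hp Hpu]] := IH u (connect1 Hux) Hne.
exists p; rewrite /Pr Hp; exact: connect_trans Hpu (connect1 Hux).
Qed.

Lemma B0_spec (V : finType) (e : rel V) : acyclic_graph e ->
  forall x, minP e x (B0 e x).
Proof.
move=> Hac x; rewrite /B0 ffunE.
case: pickP => [p Hp //|H].
have [p0 Hp0] := reach_player Hac x.
case: (arg_minnP (fun p => enum_rank p : nat) Hp0) => p Hp Hmin.
exfalso; move: (H p); rewrite /minP Hp /=; move/negbT/negP; apply.
apply/forallP => q; apply/implyP; exact: Hmin.
Qed.

Lemma minP_uniq (V : finType) (e : rel V) x p q : minP e x p -> minP e x q -> p = q.
Proof.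
case/andP => Hp /forallP Hmp; case/andP => Hq /forallP Hmq.
have := implyP (Hmp q) Hq; have := implyP (Hmq p) Hp => H1 H2.
apply: enum_rank_inj; apply: val_inj => /=; apply/eqP; by rewrite eqn_leq H1 H2.
Qed.

Lemma B0_bracket (V : finType) (e : rel V) : acyclic_graph e -> is_bracket e (B0 e).
Proof.
move=> Hac; split.
- move=> v; by case/andP: (B0_spec Hac v) => /andP [].
- move=> a Ha; case/andP: (B0_spec Hac a) => /andP [_ H] _; exact: player_conn H.
- move=> x Hx; case/andP: (B0_spec Hac x) => /andP [Hp Hpx] Hmin.
  have Hne : B0 e x != x.
    apply/negP => /eqP E; move: Hx; by rewrite /is_match -E Hp.
  have [w Hpw Hwx] := last_step Hpx Hne.
  exists w; first by rewrite inE.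
  apply: minP_uniq (B0_spec Hac w); rewrite /minP /Pr Hp Hpw /=.
  apply/forallP => q; apply/implyP => /andP [Hq Hqw].
  move/forallP: Hmin => /(_ q) /implyP; apply.
  by rewrite /Pr Hq (connect_trans Hqw (connect1 Hwx)).
Qed.

Definition Cb (V : finType) (e : rel V) (p : V) : {ffun V -> V} :=
  [ffun y => if connect e p y then p else B0 e y].

Lemma Cb_bracket (V : finType) (e : rel V) p : acyclic_graph e -> is_player e p ->
  is_bracket e (Cb e p).
Proof.
move=> Hac Hp; have [H1 H2 H3] := B0_bracket Hac; split.
- move=> v; rewrite ffunE; by case: ifP.
- move=> a Ha; rewrite ffunE; case: ifP => [H|_]; last exact: H2.
  exact: player_conn Ha H.
- move=> x Hx; rewrite ffunE; case: ifP => Hpx.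
    have Hne : p != x.
      apply/negP => /eqP E; move: Hx; by rewrite /is_match -E Hp.
    have [w Hpw Hwx] := last_step Hpx Hne.
    by exists w; rewrite ?inE // ffunE Hpw.
  have [u Hu ->] := H3 x Hx; exists u; first by [].
  rewrite [Cb _ _ _]ffunE; case: ifP => [Hpu|//].
  move: Hu; rewrite inE => Hux.
  by rewrite (connect_trans Hpu (connect1 Hux)) in Hpx.
Qed.


Local Open Scope ring_scope.
Definition dterm (R : realType) (V : finType) (sigma : V -> R) (B B' C : {ffun V -> V}) y :=
  (if C y == B y then sigma y else 0) - (if C y == B' y then sigma y else 0).

Lemma score_diff (R : realType) (V : finType) (e : rel V) (sigma : V -> R) (B B' C : {ffun V -> V}) :
  score e sigma C B - score e sigma C B' = \sum_(y | is_match e y) dterm sigma B B' C y.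
Proof. by rewrite /score !big_mkcondr -sumrB. Qed.

Lemma dterm0 (R : realType) (V : finType) (sigma : V -> R) (B B' C : {ffun V -> V}) y :
  B y = B' y -> dterm sigma B B' C y = 0.
Proof. by move=> E; rewrite /dterm E subrr. Qed.

Lemma sum_pos (R : realType) (V : finType) (P : pred V) (F : V -> R) x :
  (forall y, P y -> 0 <= F y) -> P x -> 0 < F x -> 0 < \sum_(y | P y) F y.
Proof.
move=> H Px Fx; rewrite (bigD1 x) //=; apply: (lt_le_trans Fx); rewrite lerDl.
apply: sumr_ge0 => y /andP [Py _]; exact: H.
Qed.

Definition mind (V : finType) (e : rel V) (B B' : {ffun V -> V}) x :=
  B x != B' x /\ forall z, B z != B' z -> connect e z x -> z = x.

Lemma min_exists (V : finType) (e : rel V) (B B' : {ffun V -> V}) : acyclic_graph e ->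
  forall y, B y != B' y -> exists x, mind e B B' x /\ connect e x y.
Proof.
move=> Hac; apply: (anc_ind (P := fun y => B y != B' y -> exists x, mind e B B' x /\ connect e x y) Hac).
move=> y IH Hy.
case H: [exists z, [&& B z != B' z, connect e z y & z != y]].
  case/existsP: H => z /and3P [Hz Hzy Hne].
  have [x [Hx Hxz]] := IH z Hzy Hne Hz.
  exists x; split => //; exact: connect_trans Hxz Hzy.
exists y; split; last exact: connect0.
split => // z Hz Hzy; apply/eqP; apply/negPn/negP => Hne.
by move/negbT/existsPn: H => /(_ z); rewrite Hz Hzy Hne.
Qed.


Lemma key (R : realType) (V : finType) (e : rel V) (sigma : V -> R) (B B' : {ffun V -> V}) x :
  single_elim_tournament e -> scoring_system e sigma ->
  is_bracket e B -> is_bracket e B' -> mind e B B' x ->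
  [/\ is_match e x,
      forall y, ~~ connect e x y -> dterm sigma B B' (Cb e (B x)) y = dterm sigma B B' (Cb e (B' x)) y,
      forall y, is_match e y -> connect e x y ->
         0 <= dterm sigma B B' (Cb e (B x)) y /\ dterm sigma B B' (Cb e (B' x)) y <= 0,
      dterm sigma B B' (Cb e (B x)) x = sigma x
    & dterm sigma B B' (Cb e (B' x)) x = - sigma x].
Proof.
move=> Ht Hs HB HB' [Hx Hmin].
have Hac := set_acyc Ht; have Hf := set_fnl Ht.
have Hcp := br_conn Hac HB x; have Hcq := br_conn Hac HB' x.
have Hmx : is_match e x.
  apply/negP => Hp; move: Hx; case: HB => _ H2 _; case: HB' => _ H2' _.
  by rewrite H2 // H2' // eqxx.
have Hpq : B x != B' x := Hx.
split => //.
- move=> y Hxy; case: (eqVneq (B y) (B' y)) => Eb; first by rewrite !dterm0.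
  have Hnc : forall r, connect e r x -> ~~ connect e r y.
    move=> r Hr; apply/negP => Hry.
    case/orP: (chain Hf Hr Hry) => H; first by rewrite H in Hxy.
    have := Hmin y Eb H => Eyx; subst y; by rewrite connect0 in Hxy.
  by rewrite /dterm /Cb !ffunE (negbTE (Hnc _ Hcp)) (negbTE (Hnc _ Hcq)).
- move=> y Hmy Hxy.
  have Hsy : 0 < sigma y := Hs y Hmy.
  have N1 : B' y != B x.
    apply/negP => /eqP E.
    have := br_path Ht HB' Hxy; rewrite E => /(_ Hcp) E'.
    by rewrite E' eqxx in Hpq.
  have N2 : B y != B' x.
    apply/negP => /eqP E.
    have := br_path Ht HB Hxy; rewrite E => /(_ Hcq) E'.
    by rewrite E' eqxx in Hpq.
  rewrite /dterm /Cb !ffunE (connect_trans Hcp Hxy) (connect_trans Hcq Hxy).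
  rewrite [B x == B' y]eq_sym (negbTE N1) [B' x == B y]eq_sym (negbTE N2) subr0 sub0r oppr_le0.
  by split; case: ifP => // _; apply: ltW.
- rewrite /dterm /Cb !ffunE Hcp eqxx.
  by rewrite (negbTE Hpq) subr0.
- rewrite /dterm /Cb !ffunE Hcq eqxx.
  by rewrite eq_sym (negbTE Hpq) sub0r.
Qed.


Definition SS (V : finType) (e : rel V) p0 : {set {ffun V -> V}} :=
  Cb e @: (players e :\ p0).

Lemma inSS (V : finType) (e : rel V) p0 p : is_player e p -> p != p0 -> Cb e p \in SS e p0.
Proof. by move=> Hp Hne; apply: imset_f; rewrite !inE Hne Hp. Qed.

Lemma good (R : realType) (V : finType) (e : rel V) (sigma : V -> R) (B B' : {ffun V -> V}) x p0 :
  single_elim_tournament e -> scoring_system e sigma ->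
  is_bracket e B -> is_bracket e B' -> mind e B B' x -> B x != p0 -> B' x != p0 ->
  exists2 Bi, Bi \in SS e p0 & score e sigma Bi B != score e sigma Bi B'.
Proof.
move=> Ht Hs HB HB' Hm Hp Hq.
have [Hmx Ha Hb Hc Hd] := key Ht Hs HB HB' Hm.
have Hpos : 0 < \sum_(y | is_match e y)
   (dterm sigma B B' (Cb e (B x)) y - dterm sigma B B' (Cb e (B' x)) y).
  apply: (sum_pos (x := x)) => //.
    move=> y Hy; case Hxy: (connect e x y).
      have [H1 H2] := Hb y Hy Hxy; rewrite subr_ge0; exact: le_trans H2 H1.
    by rewrite (Ha y (negbT Hxy)) subrr.
  by rewrite Hc Hd opprK addr_gt0 //; apply: Hs.
rewrite sumrB -!score_diff in Hpos.
case E: (score e sigma (Cb e (B x)) B == score e sigma (Cb e (B x)) B').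
  exists (Cb e (B' x)); first by apply: inSS => //; case: HB' => H1 _ _; exact: H1.
  apply/negP => /eqP E2; move: Hpos; by rewrite (eqP E) E2 !subrr ltxx.
exists (Cb e (B x)); first by apply: inSS => //; case: HB => H1 _ _; exact: H1.
by rewrite E.
Qed.

Lemma good2 (R : realType) (V : finType) (e : rel V) (sigma : V -> R) (B B' : {ffun V -> V}) x p0 :
  single_elim_tournament e -> scoring_system e sigma ->
  is_bracket e B -> is_bracket e B' -> mind e B B' x ->
  (forall y, B y != B' y -> connect e x y) ->
  exists2 Bi, Bi \in SS e p0 & score e sigma Bi B != score e sigma Bi B'.
Proof.
move=> Ht Hs HB HB' Hm Hall.
have [Hmx Ha Hb Hc Hd] := key Ht Hs HB HB' Hm.
have Hsx : 0 < sigma x := Hs x Hmx.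
have HD : forall y, ~~ connect e x y -> B y = B' y.
  move=> y Hy; apply/eqP; apply/negPn/negP => H; by rewrite (Hall y H) in Hy.
case: (eqVneq (B x) p0) => Hp.
- exists (Cb e (B' x)).
    apply: inSS; first by case: HB' => H1 _ _; exact: H1.
    by rewrite -Hp eq_sym; case: Hm.
  rewrite -subr_eq0 score_diff -oppr_eq0 -sumrN; apply: lt0r_neq0.
  apply: (sum_pos (x := x)) => //; last by rewrite Hd opprK.
  move=> y Hy; case Hxy: (connect e x y).
    have [_ H2] := Hb y Hy Hxy; by rewrite oppr_ge0.
  by rewrite dterm0 ?oppr0 // HD // Hxy.
- exists (Cb e (B x)).
    apply: inSS => //; by case: HB => H1 _ _; exact: H1.
  rewrite -subr_eq0 score_diff; apply: lt0r_neq0.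
  apply: (sum_pos (x := x)) => //; last by rewrite Hc.
  move=> y Hy; case Hxy: (connect e x y).
    by have [H1 _] := Hb y Hy Hxy.
  by rewrite dterm0 // HD // Hxy.
Qed.

Local Close Scope ring_scope.

Theorem theorem1p6 (R : realType) (V : finType) (e : rel V) (sigma : V -> R) :
  single_elim_tournament e ->
  scoring_system e sigma ->
  exists S : {set {ffun V -> V}},
    resolving e sigma S /\ (#|S| <= #|players e| - 1)%N.
Proof.
move=> Ht Hs; have Hac := set_acyc Ht; have Hf := set_fnl Ht.
case: (pickP (fun p => is_player e p)) => [p0 Hp0 | Hnone]; last first.
  exists set0; split; last by rewrite cards0.
  split => [Bi|B B' [H1 _ _] _ Hne]; first by rewrite inE.
  exfalso; case/negP: Hne; apply/eqP/ffunP => y.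
  by move: (Hnone (B y)); rewrite H1.
exists (SS e p0); split.
  split.
    move=> Bi /imsetP [p]; rewrite !inE => /andP [_ Hp] ->; exact: Cb_bracket.
  move=> B B' HB HB' Hne.
  have [y Hy] : exists y, B y != B' y.
    case H: [exists y, B y != B' y]; first by case/existsP: H => y Hy; exists y.
    exfalso; case/negP: Hne; apply/eqP/ffunP => z.
    by move/negbT/existsPn: H => /(_ z) /negPn /eqP.
  have [x [Hm Hxy]] := min_exists Hac Hy.
  case Hpq: ((B x != p0) && (B' x != p0)).
    by case/andP: Hpq => Hp Hq; exact: good Ht Hs HB HB' Hm Hp Hq.
  case Hall: [forall z, (B z != B' z) ==> connect e x z].
    apply: good2 Ht Hs HB HB' Hm _ => z Hz; exact: (implyP (forallP Hall z) Hz).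
  case/forallPn: Hall => z; rewrite negb_imply => /andP [Hz Hxz].
  have [x' [Hm' Hx'z]] := min_exists Hac Hz.
  have Hsame : forall r, (r == B x) || (r == B' x) -> (r == B x') || (r == B' x') -> False.
    move=> r Hr Hr'.
    have Cx : connect e r x.
      by case/orP: Hr => /eqP ->; apply: br_conn.
    have Cx' : connect e r x'.
      by case/orP: Hr' => /eqP ->; apply: br_conn.
    have Exx : x = x'.
      case/orP: (chain Hf Cx Cx') => H.
        by case: Hm' => Hd' Hmin'; apply: Hmin' => //; case: Hm.
      by apply/esym; case: Hm => Hd Hmin; apply: Hmin => //; case: Hm'.
    by subst x'; rewrite Hx'z in Hxz.
  have Hpx : (p0 == B x) || (p0 == B' x).
    by move/negbT: Hpq; rewrite negb_and !negbK ![p0 == _]eq_sym.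
  apply: (good Ht Hs HB HB' Hm').
    apply/negP => /eqP E; apply: (Hsame p0 Hpx); by rewrite E eqxx.
  apply/negP => /eqP E; apply: (Hsame p0 Hpx); by rewrite E eqxx orbT.
have := leq_imset_card (Cb e) (players e :\ p0).
rewrite (cardsD1 p0 (players e)) inE Hp0 add1n subSS.
by rewrite subn0.
Qed.
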